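(* If the hazard function $\lambda(t)$ of the random lifetime $X$ is decreasing in $t\in\mathcal S$, then $$H^w(t)\ge -\delta(t)\log\lambda(t)\qquad\text{for all } t\in\mathcal S.$$
   Context: $X$ is an absolutely continuous non-negative random variable with density $f$, support $\mathcal S=(0,\nu)$, $\nu\le+\infty$, survival function $\overline F$, and hazard function $\lambda(t)=f(t)/\overline F(t)$; ''decreasing'' means non-increasing; $\log$ is the natural logarithm. Weighted residual entropy: $H^w(t)=-\int_t^{\infty}x\,\frac{f(x)}{\overline F(t)}\log\frac{f(x)}{\overline F(t)}\,dx$. Conditional mean: $\delta(t)=\mathrm{E}(X\mid X>t)=\frac{1}{\overline F(t)}\int_t^\infty x f(x)\,dx$. *)

(* Defs.v *)
From HB Require Import structures.
From mathcomp Require Import all_boot all_order all_algebra.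
From mathcomp Require Import all_classical all_reals all_analysis.
Set Implicit Arguments. Unset Strict Implicit. Unset Printing Implicit Defensive.
Import Order.TTheory GRing.Theory Num.Theory.
Local Open Scope classical_set_scope.
Local Open Scope ring_scope.

Section Defs.
Variable R : realType.
Local Notation mu := (@lebesgue_measure R).

Definition in_support (nu : \bar R) (t : R) : Prop := 0 < t /\ (t%:E < nu)%E.

Definition is_density_on (f : R -> R) (nu : \bar R) : Prop :=
  [/\ measurable_fun setT f,
      mu.-integrable setT (EFin \o f),
      (\int[mu]_x (f x)%:E = 1)%E,
      (forall x, in_support nu x -> 0 < f x) &
      (forall x, ~ in_support nu x -> f x = 0)].

Definition survival (f : R -> R) (t : R) : R := Rintegral mu `]t, +oo[ f.

Definition hazard (f : R -> R) (t : R) : R := f t / survival f t.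

Definition wre_integrand (f : R -> R) (t : R) : R -> R :=
  fun x => x * (f x / survival f t) * ln (f x / survival f t).

Definition weighted_residual_entropy (f : R -> R) (t : R) : R :=
  - Rintegral mu `]t, +oo[ (wre_integrand f t).

Definition cond_mean (f : R -> R) (t : R) : R :=
  (survival f t)^-1 * Rintegral mu `]t, +oo[ (fun x => x * f x).

End Defs.

(* Main.v *)
Set Warnings "-all".
Require Import Defs.
From HB Require Import structures.
From mathcomp Require Import all_boot all_order all_algebra.
From mathcomp Require Import all_classical all_reals all_analysis.
From mathcomp Require Import measurable_realfun ring.
Import Order.TTheory GRing.Theory Num.Theory.
Local Open Scope classical_set_scope.
Local Open Scope ring_scope.

Lemma dens_ge0 (R : realType) (f : R -> R) nu : is_density_on f nu -> forall y, 0 <= f y.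
Proof.
case=> _ _ _ hp hz y.
have [/hp/ltW//|/hz->//] := pselect (in_support nu y).
Qed.

Lemma supp_interval (R : realType) (nu : \bar R) x : in_support nu x ->
  exists2 b, x < b & forall y, x < y -> y < b -> in_support nu y.
Proof.
case=> x0; case: nu => [r| |] /= xnu.
- exists r; first by rewrite -lte_fin.
  by move=> y xy yr; split; [exact: lt_trans xy| rewrite lte_fin].
- exists (x + 1); first by rewrite ltrDl.
  by move=> y xy _; split; [exact: lt_trans xy| exact: ltry].
- by move: xnu; rewrite ltNge leNye.
Qed.

Lemma surv_gt0 (R : realType) (f : R -> R) nu x :
  is_density_on f nu -> in_support nu x -> 0 < survival f x.
Proof.
move=> hf hx; have f0 := @dens_ge0 _ _ _ hf.
case: (hf) => mf intf _ hp hz.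
have intx : (@lebesgue_measure R).-integrable `]x, +oo[ (EFin \o f).
  by apply: integrableS intf.
have S0 : 0 <= survival f x by apply: Rintegral_ge0.
rewrite lt_def S0 andbT; apply/eqP => S0'.
have I0 : (\int[lebesgue_measure]_(y in `]x, +oo[) (f y)%:E = 0)%E.
  rewrite -(fineK (integrable_fin_num _ intx)) //.
  by move: S0'; rewrite /survival /Rintegral => ->.
have : (\int[lebesgue_measure]_(y in `]x, +oo[) `|(EFin \o f) y| = 0)%E.
  rewrite -I0; apply: eq_integral => y _ /=.
  by rewrite ger0_norm.
move/ae_eq_integral_abs => /(_ (measurable_itv _)).
case; first by case/integrableP: intx.
move=> N [mN N0 sub].
have [b xb hb] := @supp_interval _ _ _ hx.
have : (lebesgue_measure (`]x, b[ : set R) <= lebesgue_measure N)%E.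
  apply: le_measure; rewrite ?inE; [exact: measurable_itv|exact: mN|].
  move=> y /=; rewrite in_itv /= => /andP[xy yb]; apply: sub => /= H.
  have := H; rewrite in_itv /= xy => /(_ isT) [] /eqP.
  by rewrite gt_eqF// hp//; exact: hb.
rewrite N0 lebesgue_measure_itv /= lte_fin xb -EFinD lee_fin.
by rewrite leNgt subr_gt0 xb.
Qed.

Lemma surv_le (R : realType) (f : R -> R) nu t x :
  is_density_on f nu -> t <= x -> survival f x <= survival f t.
Proof.
move=> hf tx; have f0 := @dens_ge0 _ _ _ hf.
case: (hf) => mf intf _ _ _.
have intx : forall s, (@lebesgue_measure R).-integrable `]s, +oo[ (EFin \o f).
  by move=> s; apply: integrableS intf.
rewrite /survival /Rintegral fine_le//; try exact: integrable_fin_num.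
apply: ge0_subset_integral => //.
- apply/measurable_EFinP; exact: measurable_funS mf.
- by move=> y _; rewrite lee_fin.
- move=> y /=; rewrite !in_itv /= !andbT => /(le_lt_trans tx)//.
Qed.

Theorem theorem3p3 (R : realType) (f : R -> R) (nu : \bar R)
  (hnu : (0 < nu)%E)
  (hf : is_density_on f nu)
  (hmean : (@lebesgue_measure R).-integrable setT (EFin \o (fun x => x * f x)))
  (hHw : forall t, in_support nu t ->
     (@lebesgue_measure R).-integrable `]t, +oo[ (EFin \o wre_integrand f t))
  (hdec : forall s t, in_support nu s -> in_support nu t -> s <= t ->
     hazard f t <= hazard f s) :
  forall t, in_support nu t ->
    weighted_residual_entropy f t >= - (cond_mean f t * ln (hazard f t)).
Proof.
move=> t ht.
have f0 := @dens_ge0 _ _ _ hf.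
have F0 := @surv_gt0 _ _ _ _ hf ht.
case: (hf) => mf intf _ hp hz.
set F := survival f t in F0 *.
set L := hazard f t.
have imt : (@lebesgue_measure R).-integrable `]t, +oo[ (EFin \o (fun x => x * f x)).
  by apply: integrableS hmean.
rewrite /weighted_residual_entropy /cond_mean lerN2 -/F.
rewrite (_ : F^-1 * _ * ln L = (F^-1 * ln L) * \int[lebesgue_measure]_(x in `]t, +oo[) (x * f x)); last first.
  by rewrite mulrAC.
rewrite -RintegralZl//.
apply: le_Rintegral => //; first exact: hHw.
  have h := integrableZl _ (F^-1 * ln L) imt.
  apply: eq_integrable (h _); first exact: measurable_itv.
  by move=> y _ /=; rewrite EFinM.
  exact: measurable_itv.
move=> x /= tx; have {tx} : (t < x) by move: tx; rewrite /= in_itv /= andbT.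
move=> tx.
rewrite /wre_integrand.
have [fx0|fxpos] := eqVneq (f x) 0.
  by rewrite fx0 !(mul0r, mulr0).
have fxp : 0 < f x by rewrite lt_def fxpos f0.
have hx : in_support nu x.
  by apply: contrapT => hn; move: fxpos; rewrite hz // eqxx.
have Fx0 := @surv_gt0 _ _ _ _ hf hx.
have le1 : f x / F <= L.
  apply: le_trans (hdec _ _ ht hx (ltW tx)).
  rewrite /hazard ler_wpM2l// lef_pV2 ?posrE//.
  exact: (@surv_le _ _ _ _ _ hf (ltW tx)).
have fF : 0 < f x / F by rewrite divr_gt0.
have x0 : 0 < x by case: hx.
apply: (@le_trans _ _ (x * (f x / F) * ln L)).
  apply: ler_wpM2l; first by rewrite mulr_ge0 // ltW.
  by rewrite -/F ler_ln// posrE (lt_le_trans fF le1).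
rewrite le_eqVlt; apply/orP; left; apply/eqP; rewrite /F; ring.
Qed.
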